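(* Let $(\mathscr{D},b)$ be a finite bilinear form with $(\mathscr{D},b)\cong(\mathscr{D},-b)$, and let $\sigma\in\{0,4\}$. Then, up to isomorphism, there is at most one finite quadratic form $(\mathscr{D},q)$ such that $q$ refines $b$, $(\mathscr{D},q)\cong(\mathscr{D},-q)$, and $\tau_1(q)/|\tau_1(q)|=e^{2\pi i\sigma/8}$, where $\tau_1(q)=\sum_{x\in\mathscr{D}}e^{2\pi i q(x)}$.
   Context: A finite bilinear form $(\mathscr{D},b)$ is a finite abelian group $\mathscr{D}$ with a symmetric, bilinear, non-degenerate map $b:\mathscr{D}\times\mathscr{D}\to\mathbb{Q}/\mathbb{Z}$. A finite quadratic form $(\mathscr{D},q)$ is a map $q:\mathscr{D}\to\mathbb{Q}/\mathbb{Z}$ with $q(nx)=n^2q(x)$ for all $n\in\mathbb{Z}$ and $q(x+y)-q(x)-q(y)$ a non-degenerate symmetric bilinear form; $q$ refines $b$ if $q(x+y)-q(x)-q(y)=b(x,y)$ for all $x,y$. Two forms (bilinear or quadratic) on $\mathscr{D}$ and $\mathscr{D}'$ are isomorphic if they are related by precomposition with a group isomorphism $\mathscr{D}\to\mathscr{D}'$. *)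

(* Defs.v *)
(* finite abelian groups as finZmodType, Q/Z-valued maps as
   rat-valued maps compared modulo Z, Gauss sums in complex R (real_closed)
   with R the real numbers (Stdlib R, a realType via Rstruct). *)
From HB Require Import structures.
From mathcomp Require Import all_boot all_order all_algebra.
From mathcomp Require Import classical_sets reals Rstruct trigo.
From mathcomp Require Import complex.
Set Implicit Arguments. Unset Strict Implicit. Unset Printing Implicit Defensive.
Import Order.TTheory GRing.Theory Num.Theory.
Local Open Scope ring_scope.

Definition eqQZ (a b : rat) : Prop := (a - b) \is a Num.int.

Section Forms.
Variable D : finZmodType.

Definition finite_bilinear_form (b : D -> D -> rat) : Prop :=
  [/\ forall x y, eqQZ (b x y) (b y x),
      forall x y z, eqQZ (b (x + y) z) (b x z + b y z),
      forall x y z, eqQZ (b x (y + z)) (b x y + b x z)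
    & forall x, (forall y, eqQZ (b x y) 0) -> x = 0].

Definition polar (q : D -> rat) : D -> D -> rat :=
  fun x y => q (x + y) - q x - q y.

Definition finite_quadratic_form (q : D -> rat) : Prop :=
  (forall (n : int) (x : D), eqQZ (q (x *~ n)) ((n ^+ 2)%:~R * q x))
  /\ finite_bilinear_form (polar q).

Definition refines (q : D -> rat) (b : D -> D -> rat) : Prop :=
  forall x y, eqQZ (polar q x y) (b x y).

Definition group_iso (f : D -> D) : Prop :=
  bijective f /\ {morph f : x y / x + y}.

Definition iso_bil (b b' : D -> D -> rat) : Prop :=
  exists f : D -> D, group_iso f /\ forall x y, eqQZ (b' (f x) (f y)) (b x y).

Definition iso_quad (q q' : D -> rat) : Prop :=
  exists f : D -> D, group_iso f /\ forall x, eqQZ (q' (f x)) (q x).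

Definition neg_bil (b : D -> D -> rat) : D -> D -> rat := fun x y => - b x y.
Definition neg_quad (q : D -> rat) : D -> rat := fun x => - q x.

End Forms.

Definition expi (r : rat) : complex Rdefinitions.R :=
  (cos (2 * pi * ratr r) +i* sin (2 * pi * ratr r))%C.

Definition tau1 (D : finZmodType) (q : D -> rat) : complex Rdefinitions.R :=
  \sum_(x : D) expi (q x).

(* Main.v *)
Require Import Defs.
From HB Require Import structures.
From mathcomp Require Import all_boot all_order all_algebra.
From mathcomp Require Import classical_sets reals Rstruct trigo.
From mathcomp Require Import complex ring lra zify.
Import Order.TTheory GRing.Theory Num.Theory.
Local Open Scope ring_scope.

Lemma intE {x : rat} (y : rat) : x = y -> y \is a Num.int -> x \is a Num.int.
Proof. by move=> ->. Qed.

Lemma half_int (x : rat) : x + x \is a Num.int -> x \notin Num.int ->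
  exists k : int, x = k%:~R + 1 / 2.
Proof.
move=> /intrP [m hm] hx.
have hr := divz_eq m 2.
have h0 := modz_ge0 m (isT : (2:int) != 0).
have h1 := ltz_mod m (isT : (2:int) != 0).
set r := (m %% 2)%Z in hr h0 h1.
set k := (m %/ 2)%Z in hr.
have e2 : (2%:~R : rat) = 2 by [].
have : r = 0 \/ r = 1 by lia.
case=> hr'; rewrite hr' in hr; rewrite hr intrD intrM e2 in hm.
  case/negP: hx; apply/intrP; exists k.
  by rewrite addr0 in hm; lra.
exists k; lra.
Qed.

Section Alg.
Variables (D : finZmodType) (q q' : D -> rat) (c : D).
Hypotheses (Hq : finite_quadratic_form q) (Hq' : finite_quadratic_form q').
Hypothesis Hpol : forall x y, eqQZ (polar q' x y) (polar q x y).
Hypothesis Hc : forall y, (polar q' c y + (q' y - q y)) \is a Num.int.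
Hypothesis Hqc : q' c \is a Num.int.

Let d x := q' x - q x.

Lemma dadd x y : d (x + y) - d x - d y \is a Num.int.
Proof.
apply: (intE (polar q' x y - polar q x y)); last exact: Hpol.
by rewrite /d /polar; ring.
Qed.

Lemma q'0 : q' 0 \is a Num.int.
Proof.
have := Hq'.1 0 0; rewrite /eqQZ mulr0z expr0n /= mul0r subr0.
done.
Qed.

Lemma qmul2 (Q : D -> rat) : finite_quadratic_form Q -> forall x,
  Q (x + x) - 4 * Q x \is a Num.int.
Proof.
move=> HQ x; have := HQ.1 2 x; rewrite /eqQZ.
have -> : x *~ 2 = x + x by rewrite -mulr2n.
done.
Qed.

Lemma d2 x : d x + d x \is a Num.int.
Proof.
apply: (intE ((d (x + x) - d x - d x) - ((q' (x + x) - 4 * q' x) - (q (x + x) - 4 * q x)))).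
  by rewrite /d; ring.
by apply: rpredB; [apply: dadd | apply: rpredB; apply: qmul2].
Qed.

Lemma dsum x y : d x \notin Num.int -> d y \notin Num.int -> d (x + y) \is a Num.int.
Proof.
move=> hx hy.
have [k hk] := half_int _ (d2 x) hx.
have [l hl] := half_int _ (d2 y) hy.
apply: (intE ((d (x + y) - d x - d y) + ((k + l + 1)%:~R))).
  by rewrite hk hl !intrD /=; field.
by rewrite rpredD ?dadd // intr_int.
Qed.

Let bil := Hq'.2.

Lemma c2 : c + c = 0.
Proof.
case: bil => _ hl _ hnd; apply: hnd => y; rewrite /eqQZ subr0.
apply: (intE ((polar q' (c + c) y - (polar q' c y + polar q' c y))
   + (polar q' c y + d y) + (polar q' c y + d y) - (d y + d y))).
  by ring.
by apply: rpredB; [apply: rpredD; [apply: rpredD; [exact: hl | exact: Hc] | exact: Hc] | exact: d2].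
Qed.

Lemma dc : d c \is a Num.int.
Proof.
apply: (intE ((polar q' c c + d c) - q' (c + c) + q' c + q' c)).
  by rewrite /polar; ring.
by apply: rpredD; [apply: rpredD; [apply: rpredB; [exact: Hc | rewrite c2; exact: q'0] | exact: Hqc] | exact: Hqc].
Qed.

Let P x := d x \is a Num.int.
Ltac zi := repeat (first [exact: dadd | exact: dc | assumption | exact: Hc | apply: rpredB | apply: rpredD | apply: rpredN]).

Lemma Pc x : P (x + c) = P x.
Proof.
rewrite /P; apply/idP/idP => h.
  apply: (intE (d (x + c) - (d (x + c) - d x - d c) - d c)); first by ring.
  by zi.
apply: (intE ((d (x + c) - d x - d c) + d x + d c)); first by ring.
by zi.
Qed.

Definition fiso x := if P x then x else x + c.

Lemma fiso_inv : involutive fiso.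
Proof.
move=> x; rewrite /fiso; case hx: (P x); first by rewrite hx.
by rewrite Pc hx -addrA c2 addr0.
Qed.

Lemma fiso_add : {morph fiso : x y / x + y}.
Proof.
move=> x y; rewrite /fiso.
have Hxy : P (x + y) = P x && P y || ~~ P x && ~~ P y.
  case hx: (P x); case hy: (P y) => /=.
  - apply: (intE ((d (x + y) - d x - d y) + d x + d y)); first by ring.
    by zi.
  - apply/negbTE/negP => h; move/negP: hy; apply.
    apply: (intE (d (x + y) - (d (x + y) - d x - d y) - d x)); first by ring.
    by zi.
  - apply/negbTE/negP => h; move/negP: hx; apply.
    apply: (intE (d (x + y) - (d (x + y) - d x - d y) - d y)); first by ring.
    by zi.
  - by apply: dsum; apply/negbT; [exact: hx | exact: hy].
case hx: (P x); case hy: (P y); rewrite hx hy /= in Hxy; rewrite Hxy //.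
- by rewrite addrA.
- by rewrite addrAC.
- by rewrite addrACA c2 addr0.
Qed.

Lemma fiso_q x : eqQZ (q' (fiso x)) (q x).
Proof.
rewrite /fiso /eqQZ; case: ifP => hx //.
apply: (intE ((polar q' c x + d x) + q' c)).
  by rewrite /polar /d [c + x]addrC; ring.
by zi.
Qed.

Lemma alg_iso : iso_quad q q'.
Proof.
exists fiso; split; last exact: fiso_q.
split; last exact: fiso_add.
by exists fiso; apply: fiso_inv.
Qed.

End Alg.
Local Notation RR := Rdefinitions.R.

Lemma expiD a b : expi (a + b) = expi a * expi b.
Proof.
rewrite /expi rmorphD mulrDr cosD sinD; simpc.
by congr (_ +i* _)%C; ring.
Qed.

Lemma cs2pin (n : nat) :
  cos (2 * pi * n%:R) = 1 :> RR /\ sin (2 * pi * n%:R) = 0 :> RR.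
Proof.
elim: n => [|n [c s]]; first by rewrite mulr0 cos0 sin0.
have -> : 2 * pi * n.+1%:R = 2 * pi * n%:R + pi *+ 2 :> RR.
  by rewrite -addn1 natrD; ring.
by split; [rewrite cosD | rewrite sinD]; rewrite c s cos2pi sin2pi; ring.
Qed.

Lemma cs2piz (k : int) :
  cos (2 * pi * k%:~R) = 1 :> RR /\ sin (2 * pi * k%:~R) = 0 :> RR.
Proof.
case: k => n.
  by have := cs2pin n.
rewrite NegzE mulrNz mulrN cosN sinN.
by have [-> ->] := cs2pin n.+1; rewrite oppr0.
Qed.

Lemma expi_int (k : int) : expi k%:~R = 1.
Proof.
by rewrite /expi rmorph_int; have [-> ->] := cs2piz k.
Qed.

Lemma expi_eqQZ a b : eqQZ a b -> expi a = expi b.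
Proof.
move=> /intrP [k hk].
have -> : a = b + k%:~R by rewrite -hk addrC subrK.
by rewrite expiD expi_int mulr1.
Qed.

Lemma expi0 : expi 0 = 1.
Proof. by rewrite /expi rmorph0 mulr0 cos0 sin0. Qed.

Lemma expiN r : conjc (expi r) = expi (- r).
Proof. by rewrite /expi rmorphN mulrN cosN sinN; simpc. Qed.

Lemma expiN' r : (cos (2 * pi * ratr r) -i* sin (2 * pi * ratr r))%C = expi (- r).
Proof. by rewrite -expiN. Qed.

Lemma expi_conj r : expi r * conjc (expi r) = 1.
Proof.
rewrite /expi; simpc.
by rewrite -!expr2 cos2Dsin2 [sin _ * cos _]mulrC addNr.
Qed.

Lemma cos_lt1 (x : RR) : 0 < x -> x < pi *+ 2 -> cos x < 1.
Proof.
move=> x0 x2.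
have pi0 : (0 : RR) < pi := pi_gt0 RR.
have mono := @ltr_cos RR.
case: (leP x pi) => hxp.
  rewrite -cos0 mono // in_itv /=; apply/andP; split => //; exact: ltW.
have -> : cos x = cos (pi *+ 2 - x).
  by rewrite cosB cos2pi sin2pi; ring.
rewrite -cos0 mono // ?in_itv /=.
all: rewrite ?mulr2n in x2 *.
- lra.
- apply/andP; split; lra.
- apply/andP; split; lra.
Qed.

Lemma expi1 r : expi r = 1 -> r \is a Num.int.
Proof.
move=> h.
set n := Num.floor r.
set f := r - n%:~R.
have hf : expi f = 1.
  rewrite -h; apply: expi_eqQZ; apply/intrP; exists (- n).
  by rewrite /f mulrNz; ring.
have hc : cos (2 * pi * ratr f) = 1 :> RR.
  by move: hf; rewrite /expi => -[].
have [lo hi] : 0 <= f /\ f < 1.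
  have /andP [a b] := Num.Theory.floor_itv r.
  split; first by rewrite subr_ge0.
  rewrite intrD /= in b; rewrite /f; lra.
have [/eqP f0|f0] := boolP (f == 0).
  apply/intrP; exists n; rewrite /f in f0; lra.
have fpos : 0 < f by rewrite lt_def f0 lo.
have F1 : ratr f < 1 :> RR by rewrite -(rmorph1 (@ratr RR)) ltr_rat.
have F0 : 0 < ratr f :> RR by rewrite ltr0q.
have pi0 : (0 : RR) < pi := pi_gt0 RR.
have := @cos_lt1 (2 * pi * ratr f); rewrite hc ltxx mulr2n.
move=> H; suff: false by []; apply: H; nra.
Qed.

Lemma orth1 (D : finZmodType) (chi : D -> rat) :
  (forall y, chi y \is a Num.int) -> \sum_(y : D) expi (chi y) = #|D|%:R.
Proof.
move=> h; rewrite (eq_bigr (fun _ => 1)) => [|y _]; last first.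
  by rewrite -expi0; apply: expi_eqQZ; rewrite /eqQZ subr0.
by rewrite sumr_const.
Qed.

Lemma orth0 (D : finZmodType) (chi : D -> rat) y0 :
  (forall x y, eqQZ (chi (x + y)) (chi x + chi y)) -> chi y0 \notin Num.int ->
  \sum_(y : D) expi (chi y) = 0.
Proof.
move=> hadd hy0.
set S := \sum_(y : D) _.
have hS : S = S * expi (chi y0).
  rewrite {2}/S mulr_suml /S (reindex_inj (addIr y0)) /=.
  apply: eq_bigr => y _; rewrite -expiD; exact: expi_eqQZ (hadd _ _).
have hne : expi (chi y0) != 1 by apply/eqP => /expi1; apply/negP.
apply/eqP; have : S * (1 - expi (chi y0)) = 0 by rewrite mulrBr mulr1 -hS subrr.
by move/eqP; rewrite mulf_eq0 subr_eq0 [1 == _]eq_sym (negbTE hne) orbF.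
Qed.

Lemma intE' {x : rat} (y : rat) : x = y -> y \is a Num.int -> x \is a Num.int.
Proof. by move=> ->. Qed.

Lemma gauss_key (D : finZmodType) (q q' : D -> rat) :
  finite_quadratic_form q' ->
  (forall x y, eqQZ (polar q' x y) (polar q x y)) ->
  0 < tau1 q' * conjc (tau1 q) ->
  exists c, (forall y, (polar q' c y + (q' y - q y)) \is a Num.int)
            /\ q' c \is a Num.int.
Proof.
move=> [_ [_ hl hr hnd]] hpol hpos.
pose chi z y := polar q' z y + (q' y - q y).
have chiadd z x y : eqQZ (chi z (x + y)) (chi z x + chi z y).
  rewrite /eqQZ; apply: (intE' ((polar q' z (x + y) - (polar q' z x + polar q' z y))
     + (polar q' x y - polar q x y))).
    by rewrite /chi /polar; ring.
  by apply: rpredD; [exact: hr | exact: hpol].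
have E : tau1 q' * conjc (tau1 q) =
         \sum_(z : D) expi (q' z) * \sum_(y : D) expi (chi z y).
  rewrite /tau1 rmorph_sum mulr_suml.
  under eq_bigr do rewrite mulr_sumr.
  under [RHS]eq_bigr do rewrite mulr_sumr.
  rewrite [RHS]exchange_big [LHS]exchange_big /=.
  apply: eq_bigr => y _.
  rewrite (reindex_inj (addIr y)) /=; apply: eq_bigr => z _.
  rewrite expiN' -!expiD; congr expi; rewrite /chi /polar; ring.
pose Pz z := [forall y, chi z y \is a Num.int].
have Hsum z : \sum_(y : D) expi (chi z y) = if Pz z then #|D|%:R else 0.
  case: ifP => hz.
    by apply: orth1 => y; move/forallP: hz => /(_ y).
  move/negbT/forallPn: hz => [y0 hy0].
  exact: (@orth0 _ _ _ (chiadd z) hy0).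
have uniq z : Pz z -> forall c, Pz c -> z = c.
  move=> /forallP hz c /forallP hc; apply/eqP; rewrite -subr_eq0; apply/eqP.
  apply: hnd => y; rewrite /eqQZ subr0.
  apply: (intE' ((chi z y - chi c y) - (polar q' (z - c + c) y - (polar q' (z - c) y + polar q' c y)))).
    by rewrite subrK /chi; ring.
  by apply: rpredB; [apply: rpredB; [exact: hz | exact: hc] | exact: hl].
case: (pickP Pz) => [c hc|hnone]; last first.
  move: hpos; rewrite E big1 ?ltxx // => z _; by rewrite Hsum hnone /= mulr0.
exists c; split; first by move=> y; move/forallP: hc => /(_ y).
have E2 : tau1 q' * conjc (tau1 q) = expi (q' c) * #|D|%:R.
  rewrite E (bigD1 c) //= Hsum hc big1 ?addr0 // => z hz.
  rewrite Hsum; case: ifP => [hPz|]; last by rewrite mulr0.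
  by move/eqP: hz; case; apply: uniq.
have Dpos : (0 : complex RR) < #|D|%:R.
  by rewrite ltr0n; apply/card_gt0P; exists 0.
rewrite E2 pmulr_lgt0 // /expi ltcE /= in hpos.
case/andP: hpos => /eqP hs hc0.
have hcos : cos (2 * pi * ratr (q' c)) = 1 :> RR.
  have := @cos2Dsin2 RR (2 * pi * ratr (q' c)); rewrite hs; nra.
by apply: expi1; rewrite /expi hcos hs.
Qed.

Theorem proposition6 (D : finZmodType) (b : D -> D -> rat) (sigma : nat) :
  finite_bilinear_form b ->
  iso_bil b (neg_bil b) ->
  (sigma = 0%N \/ sigma = 4%N) ->
  forall q q' : D -> rat,
    finite_quadratic_form q -> refines q b -> iso_quad q (neg_quad q) ->
    tau1 q / `|tau1 q| = expi (sigma%:R / 8) ->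
    finite_quadratic_form q' -> refines q' b -> iso_quad q' (neg_quad q') ->
    tau1 q' / `|tau1 q'| = expi (sigma%:R / 8) ->
    iso_quad q q'.
Proof.
move=> _ _ _ q q' Hq Hr _ Ht Hq' Hr' _ Ht'.
set u := expi _ in Ht Ht'.
have hpol : forall x y, eqQZ (polar q' x y) (polar q x y).
  move=> x y; rewrite /eqQZ.
  apply: (intE' ((polar q' x y - b x y) - (polar q x y - b x y))); first by ring.
  by apply: rpredB; [exact: Hr' | exact: Hr].
have hu : u * conjc u = 1 by apply: expi_conj.
have nz (T : complex RR) : T / `|T| = u -> T != 0.
  move=> hT; apply/eqP => T0; move: hu; rewrite -hT T0 !mul0r => /eqP.
  by rewrite eq_sym oner_eq0.
have Tu (T : complex RR) : T / `|T| = u -> T = u * `|T|.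
  move=> hT; rewrite -hT divfK // normr_eq0; exact: nz.
have cn (z : complex RR) : conjc `|z| = `|z| by rewrite normc_def conjc_real.
have hpos : 0 < tau1 q' * conjc (tau1 q).
  have cM (x y : complex RR) : conjc (x * y) = conjc x * conjc y by exact: rmorphM.
  rewrite (Tu _ Ht') (Tu _ Ht) cM cn mulrACA hu mul1r.
  by rewrite mulr_gt0 // normr_gt0; apply: nz.
have [c [hc hqc]] := gauss_key _ _ _ Hq' hpol hpos.
exact: (alg_iso _ _ _ _ Hq Hq' hpol hc hqc).
Qed.
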